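(* Let $G$ be the infinite king grid. The code $C=\{(x,y)\in\mathbb{Z}^2\mid x-y\equiv 0\pmod 3\}$ is self-locating-dominating in $G$ and its density is $1/3$.
   Context: The infinite king grid $G=(V,E)$ has $V=\mathbb{Z}^2$, and distinct vertices $(u_1,u_2)$, $(v_1,v_2)$ are adjacent iff $|u_1-v_1|\le1$ and $|u_2-v_2|\le1$. Let $V_n=\{(x,y)\mid |x|\le n,|y|\le n\}$; the density of a code $C\subseteq V$ is $D(C)=\limsup_{n\to\infty}|C\cap V_n|/|V_n|$. $N[v]$ is the closed neighbourhood of $v$, and for a code $C$, $I(C;v)=N[v]\cap C$. A code $C$ is self-locating-dominating if for every $u\in V\setminus C$, $I(C;u)\ne\emptyset$ and $\bigcap_{c\in I(C;u)}N[c]=\{u\}$. *)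

(* Defs.v *)
From Stdlib Require Import Reals ZArith List Lia.
From Coquelicot Require Import Coquelicot.
Import ListNotations.
Open Scope Z_scope.

Definition vertex := (Z * Z)%type.

Definition king_adj (u v : vertex) : Prop :=
  u <> v /\ Z.abs (fst u - fst v) <= 1 /\ Z.abs (snd u - snd v) <= 1.

Definition closed_nbhd (v w : vertex) : Prop := w = v \/ king_adj v w.

Definition code := vertex -> bool.

Definition I_set (C : code) (u c : vertex) : Prop := closed_nbhd u c /\ C c = true.

Definition self_locating_dominating (C : code) : Prop :=
  forall u : vertex, C u = false ->
    (exists c, I_set C u c) /\
    (forall w : vertex, (forall c, I_set C u c -> closed_nbhd c w) <-> w = u).

(* V_n = {(x,y) | |x| <= n, |y| <= n}, enumerated as a list without repetition. *)
Definition zrange (n : nat) : list Z :=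
  map (fun k => Z.of_nat k - Z.of_nat n) (seq 0 (2 * n + 1)).
Definition V_n (n : nat) : list vertex := list_prod (zrange n) (zrange n).

Definition density (C : code) : Rbar :=
  LimSup_seq (fun n : nat =>
    (INR (length (filter C (V_n n))) / INR (length (V_n n)))%R).

Definition C3 : code := fun v => Z.eqb ((fst v - snd v) mod 3) 0.

(* Main.v *)
Require Import Defs.
From Stdlib Require Import Reals ZArith List Lia Lra Psatz.
From Coquelicot Require Import Coquelicot.
Open Scope Z_scope.

Lemma sld : self_locating_dominating C3.
Proof.
  intros [x y] Hu. unfold C3 in Hu; simpl in Hu.
  apply Z.eqb_neq in Hu.
  assert (Hinv : forall c, closed_nbhd (x,y) c -> closed_nbhd c (x,y)).
  { intros [a b] [H|[H1 [H2 H3]]]; [left; congruence|].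
    right. unfold king_adj in *; cbn [fst snd] in *. split; [congruence|split; lia]. }
  assert (Hcl : forall c w, closed_nbhd c w -> Z.abs (fst c - fst w) <= 1 /\ Z.abs (snd c - snd w) <= 1).
  { intros c w [H|[_ [H1 H2]]]; [subst; lia | lia]. }
  assert (Hmk : forall a b, (a,b) <> (x,y) -> Z.abs (x - a) <= 1 -> Z.abs (y - b) <= 1 ->
             (a - b) mod 3 = 0 -> I_set C3 (x,y) (a,b)).
  { intros a b Hne H1 H2 H3. split.
    - right. split; [congruence|cbn [fst snd]; lia].
    - unfold C3; simpl. apply Z.eqb_eq. exact H3. }
  split.
  - destruct (Z.eq_dec ((x - y) mod 3) 1) as [Hr|Hr].
    + exists (x-1, y). apply Hmk; [intro H; inversion H; lia|lia|lia|].
      Z.div_mod_to_equations. lia.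
    + exists (x+1, y). apply Hmk; [intro H; inversion H; lia|lia|lia|].
      Z.div_mod_to_equations. lia.
  - intros [p q]; split.
    2:{ intros E; rewrite E; intros c [Hc _]; apply Hinv, Hc. }
    intros H.
    destruct (Z.eq_dec ((x - y) mod 3) 1) as [Hr|Hr].
    + pose proof (Hcl _ _ (H (x-1,y) ltac:(apply Hmk; [intro E; inversion E; lia|lia|lia|Z.div_mod_to_equations; lia]))).
      pose proof (Hcl _ _ (H (x,y+1) ltac:(apply Hmk; [intro E; inversion E; lia|lia|lia|Z.div_mod_to_equations; lia]))).
      pose proof (Hcl _ _ (H (x+1,y-1) ltac:(apply Hmk; [intro E; inversion E; lia|lia|lia|Z.div_mod_to_equations; lia]))).
      cbn [fst snd] in *. f_equal; lia.
    + pose proof (Hcl _ _ (H (x+1,y) ltac:(apply Hmk; [intro E; inversion E; lia|lia|lia|Z.div_mod_to_equations; lia]))).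
      pose proof (Hcl _ _ (H (x,y-1) ltac:(apply Hmk; [intro E; inversion E; lia|lia|lia|Z.div_mod_to_equations; lia]))).
      pose proof (Hcl _ _ (H (x-1,y+1) ltac:(apply Hmk; [intro E; inversion E; lia|lia|lia|Z.div_mod_to_equations; lia]))).
      cbn [fst snd] in *. f_equal; lia.
Qed.
Lemma row_count : forall c m (s : nat),
  Z.of_nat (length (filter (fun k : nat => (c - Z.of_nat k) mod 3 =? 0) (seq s m)))
  = (Z.of_nat m + 2 - (c - Z.of_nat s) mod 3) / 3.
Proof.
  intros c m; induction m as [|m IH]; intros s.
  - cbn [seq filter length]. pose proof (Z.mod_pos_bound (c - Z.of_nat s) 3). Z.div_mod_to_equations. lia.
  - cbn [seq filter]. specialize (IH (S s)).
    destruct ((c - Z.of_nat s) mod 3 =? 0) eqn:E.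
    + apply Z.eqb_eq in E. cbn [length]. rewrite Nat2Z.inj_succ, IH.
      rewrite Nat2Z.inj_succ in *. Z.div_mod_to_equations. lia.
    + apply Z.eqb_neq in E. rewrite IH.
      rewrite Nat2Z.inj_succ in *. Z.div_mod_to_equations. lia.
Qed.

Lemma row_bound : forall x n,
  let m := (2 * n + 1)%nat in
  let a := length (filter (fun y => C3 (x, y)) (zrange n)) in
  (m <= 3 * a + 2 /\ 3 * a <= m + 2)%nat.
Proof.
  intros x n m a.
  assert (Ha : a = length (filter (fun k : nat => ((x + Z.of_nat n) - Z.of_nat k) mod 3 =? 0) (seq 0 m))).
  { unfold a, zrange, m. rewrite filter_map_swap, length_map. f_equal. apply filter_ext. intros k.
    unfold C3; cbn [fst snd]. f_equal. f_equal. lia. }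
  pose proof (row_count (x + Z.of_nat n) m 0). rewrite <- Ha in H.
  pose proof (Z.mod_pos_bound (x + Z.of_nat n - Z.of_nat 0) 3).
  Z.div_mod_to_equations. lia.
Qed.

Lemma prod_count : forall (l1 l2 : list Z) (f : vertex -> bool),
  length (filter f (list_prod l1 l2)) =
  list_sum (map (fun x => length (filter (fun y => f (x, y)) l2)) l1).
Proof.
  intros l1 l2 f; induction l1 as [|x l1 IH]; [reflexivity|].
  cbn [list_prod map list_sum]. rewrite filter_app, length_app. cbn [list_sum].
  rewrite filter_map_swap, length_map. unfold list_sum; cbn [fold_right]. f_equal. exact IH.
Qed.

Lemma sum_bound : forall (l : list Z) (g : Z -> nat) m,
  (forall x, m <= 3 * g x + 2 /\ 3 * g x <= m + 2)%nat ->
  (length l * m <= 3 * list_sum (map g l) + 2 * length l /\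
   3 * list_sum (map g l) <= length l * m + 2 * length l)%nat.
Proof.
  intros l g m H; induction l as [|x l IH]; [simpl; lia|].
  unfold list_sum in *; cbn [map fold_right length] in *. specialize (H x). nia.
Qed.

Lemma total_bound : forall n,
  let m := (2 * n + 1)%nat in
  let a := length (filter C3 (V_n n)) in
  (m * m <= 3 * a + 2 * m /\ 3 * a <= m * m + 2 * m)%nat.
Proof.
  intros n m a. unfold a, V_n. rewrite prod_count.
  assert (Hl : length (zrange n) = m) by (unfold zrange; rewrite length_map, length_seq; reflexivity).
  pose proof (sum_bound (zrange n) (fun x => length (filter (fun y => C3 (x, y)) (zrange n))) m
     (fun x => row_bound x n)). rewrite Hl in H. exact H.
Qed.
Open Scope R_scope.

Lemma rbound : forall a M N, 0 < M -> 0 <= N -> N + 1 <= M ->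
  M * M <= 3 * a + 2 * M -> 3 * a <= M * M + 2 * M ->
  1/3 - / (N + 1) <= a / (M * M) <= 1/3 + / (N + 1).
Proof.
  intros a M N HM HN HNM H1 H2.
  set (i := / M). set (j := / (N+1)).
  assert (Hi : M * i = 1) by (unfold i; field; lra).
  assert (Hj : (N+1) * j = 1) by (unfold j; field; lra).
  assert (Hip : 0 < i) by (unfold i; apply Rinv_0_lt_compat; lra).
  assert (Hjp : 0 < j) by (unfold j; apply Rinv_0_lt_compat; lra).
  assert (Hij : i <= j) by (unfold i, j; apply Rinv_le_contravar; lra).
  replace (a / (M * M)) with (a * i * i) by (unfold i; field; lra).
  assert (E1 : (M*M) * (i*i) = 1) by nra.
  assert (E2 : M * (i*i) = i) by nra.
  split; nra.
Qed.

Lemma inv_lim : is_lim_seq (fun n => / (INR n + 1)) 0.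
Proof.
  assert (H : is_lim_seq (fun n => INR n + 1) p_infty).
  { apply (is_lim_seq_plus _ _ p_infty 1 p_infty); [apply is_lim_seq_INR|apply is_lim_seq_const|].
    simpl. reflexivity. }
  pose proof (is_lim_seq_inv _ _ H ltac:(discriminate)). simpl in H0. exact H0.
Qed.

Lemma dens : density C3 = Finite (1 / 3).
Proof.
  unfold density. apply is_LimSup_seq_unique, is_lim_LimSup_seq.
  apply is_lim_seq_le_le with (u := fun n => 1/3 - / (INR n + 1)) (w := fun n => 1/3 + / (INR n + 1)).
  - intros n. pose proof (total_bound n) as [H1 H2]. cbv zeta in H1, H2.
    assert (HL : length (V_n n) = ((2*n+1)*(2*n+1))%nat).
    { unfold V_n. etransitivity; [exact (length_prod (zrange n) (zrange n))|]. unfold zrange; rewrite length_map, length_seq; reflexivity. }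
    rewrite HL, mult_INR. apply rbound.
    + apply lt_0_INR; lia.
    + apply pos_INR.
    + rewrite <- S_INR. apply le_INR. lia.
    + apply le_INR in H1. rewrite plus_INR, !mult_INR in H1. simpl (INR 3) in H1. simpl (INR 2) in H1. lra.
    + apply le_INR in H2. rewrite plus_INR, !mult_INR in H2. simpl (INR 3) in H2. simpl (INR 2) in H2. lra.
  - replace (Finite (1/3)) with (Rbar_minus (1/3) 0) by (simpl; f_equal; ring).
    apply is_lim_seq_minus'; [apply is_lim_seq_const|apply inv_lim].
  - replace (Finite (1/3)) with (Rbar_plus (1/3) 0) by (simpl; f_equal; ring).
    apply is_lim_seq_plus'; [apply is_lim_seq_const|apply inv_lim].
Qed.

Theorem theorem12 :
  self_locating_dominating C3 /\ density C3 = Finite (1 / 3)%R.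
Proof. split; [exact sld | exact dens]. Qed.
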